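(* (a) The functions $\mathcal{F}$ and $\mathcal{R}$ are Lipschitz continuous over $\Omega_\theta$. (b) Let $L_{\mathcal{F}}$ and $L_{\mathcal{R}}$ be Lipschitz constants of $\mathcal{F}$ and $\mathcal{R}$ over $\Omega_\theta$, and suppose $\beta>L_{\mathcal{F}}+L_{\mathcal{R}}$. If $\bar z\in\Omega_\theta$ is a global minimizer of problem (R), then $\bar z$ is also a global minimizer of problem (RP). (c) Let $\delta=3\theta+\frac{2N\theta^3}{\lambda_1^2\lambda_2}$ and $\Omega_\delta=\{z\in\Omega_2:\mathcal{O}(z)\le\delta\}$. Let $L_{\mathcal{F}}$ and $L_{\mathcal{R}}$ be Lipschitz constants of $\mathcal{F}$ and $\mathcal{R}$ over $\Omega_\delta$, and suppose $\beta>L_{\mathcal{F}}+L_{\mathcal{R}}$. If $\bar z\in\Omega_\theta$ is a global minimizer of problem (RP), then $\bar z$ is also a global minimizer of problem (R).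
   Context: Let $N,N_0,N_1$ be positive integers, $X=(x_1,\ldots,x_N)\in\mathbb{R}^{N_0\times N}$ a given data matrix, and $\lambda_1,\lambda_2,\beta>0$ given parameters. For a real vector $y$, $(y)_+=\max\{y,0\}$ componentwise; $e$ denotes the all-ones vector of $\mathbb{R}^{N_1}$. For a matrix $Y$, $\|Y\|_F$ is the Frobenius norm. The variable is $z=(\mathrm{vec}(W)^\top,b^\top,\mathrm{vec}(V)^\top)^\top\in\mathbb{R}^{N_2}$, $N_2=N_0N_1+N_1+N_0+N_1N$, where $W\in\mathbb{R}^{N_1\times N_0}$, $b=(b_1^\top,b_2^\top)^\top$ with $b_1\in\mathbb{R}^{N_1}$, $b_2\in\mathbb{R}^{N_0}$, $V=(v_1,\ldots,v_N)\in\mathbb{R}^{N_1\times N}$, and vec is columnwise vectorization. Define $\mathcal{F}(z)=\frac1N\sum_{n=1}^N\|(W^\top v_n+b_2)_+-x_n\|_2^2$, $\mathcal{R}(z)=\lambda_1\sum_{n=1}^N e^\top v_n+\lambda_2\|W\|_F^2$, $\mathcal{P}(z)=\beta\sum_{n=1}^N e^\top(v_n-(Wx_n+b_1)_+)$, and $\mathcal{O}=\mathcal{F}+\mathcal{R}+\mathcal{P}$. Let $\Omega_1=\{z: v_n=(Wx_n+b_1)_+,\ n=1,\ldots,N\}$ and $\Omega_2=\{z: v_n\ge (Wx_n+b_1)_+,\ n=1,\ldots,N\}$. Fix $\theta>\frac1N\|X\|_F^2$ and let $\Omega_\theta=\{z\in\Omega_2:\mathcal{O}(z)\le\theta\}$.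 Problem (R) is: minimize $\mathcal{F}(z)+\mathcal{R}(z)$ subject to $z\in\Omega_1$. Problem (RP) is: minimize $\mathcal{O}(z)$ subject to $z\in\Omega_2$. *)

(* Defs.v *)
From HB Require Import structures.
From mathcomp Require Import all_boot all_order all_algebra.
From mathcomp Require Import reals.
Set Implicit Arguments. Unset Strict Implicit. Unset Printing Implicit Defensive.
Import Order.TTheory GRing.Theory Num.Theory.
Local Open Scope ring_scope.

Section Defs.
Variable R : realType.

(* The variable z = (vec W, b1, b2, vec V) stored componentwise. *)
Record param (N0 N1 N : nat) := Param {
  pW  : 'M[R]_(N1, N0);
  pb1 : 'cV[R]_N1;
  pb2 : 'cV[R]_N0;
  pV  : 'M[R]_(N1, N) }.

Definition frob2 (m n : nat) (A : 'M[R]_(m, n)) : R :=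
  \sum_(i < m) \sum_(j < n) A i j ^+ 2.

Definition relu (m n : nat) (A : 'M[R]_(m, n)) : 'M[R]_(m, n) :=
  map_mx (fun x => Num.max x 0) A.

Variables (N0 N1 N : nat).

Definition pdist (z1 z2 : param N0 N1 N) : R :=
  Num.sqrt (frob2 (pW z1 - pW z2) + frob2 (pb1 z1 - pb1 z2)
          + frob2 (pb2 z1 - pb2 z2) + frob2 (pV z1 - pV z2)).

Variables (X : 'M[R]_(N0, N)) (lam1 lam2 beta : R).

Definition Ffun (z : param N0 N1 N) : R :=
  N%:R^-1 * \sum_(n < N)
    frob2 (relu ((pW z)^T *m col n (pV z) + pb2 z) - col n X).

Definition Rfun (z : param N0 N1 N) : R :=
  lam1 * (\sum_(n < N) \sum_(k < N1) pV z k n) + lam2 * frob2 (pW z).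

Definition Pfun (z : param N0 N1 N) : R :=
  beta * \sum_(n < N) \sum_(k < N1)
    (col n (pV z) - relu (pW z *m col n X + pb1 z)) k 0.

Definition Ofun (z : param N0 N1 N) : R := Ffun z + Rfun z + Pfun z.

Definition Omega1 (z : param N0 N1 N) : Prop :=
  forall n : 'I_N, col n (pV z) = relu (pW z *m col n X + pb1 z).

Definition Omega2 (z : param N0 N1 N) : Prop :=
  forall (n : 'I_N) (k : 'I_N1),
    relu (pW z *m col n X + pb1 z) k 0 <= pV z k n.

Definition OmegaLvl (t : R) (z : param N0 N1 N) : Prop :=
  Omega2 z /\ Ofun z <= t.

Definition globmin_R (zb : param N0 N1 N) : Prop :=
  Omega1 zb /\ forall z, Omega1 z -> Ffun zb + Rfun zb <= Ffun z + Rfun z.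

Definition globmin_RP (zb : param N0 N1 N) : Prop :=
  Omega2 zb /\ forall z, Omega2 z -> Ofun zb <= Ofun z.

Definition lipconst (f : param N0 N1 N -> R) (S : param N0 N1 N -> Prop) (L : R)
  : Prop :=
  0 <= L /\ forall z1 z2, S z1 -> S z2 -> `|f z1 - f z2| <= L * pdist z1 z2.

Definition lipschitz_on (f : param N0 N1 N -> R) (S : param N0 N1 N -> Prop)
  : Prop := exists L, lipconst f S L.

End Defs.

(* Main.v *)
Require Import Defs.
From HB Require Import structures.
From mathcomp Require Import all_boot all_order all_algebra.
From mathcomp Require Import reals.
From mathcomp Require Import ring lra.
Import Order.TTheory GRing.Theory Num.Theory.
Local Open Scope ring_scope.

Set Implicit Arguments.

Section Aux.
Variable R : realType.

Lemma nle (a c : R) : `|a| <= c -> -c <= a /\ a <= c.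
Proof. by rewrite ler_norml => /andP. Qed.

Lemma nge (a : R) : a <= `|a| /\ - a <= `|a|.
Proof. by split; [exact: ler_norm | rewrite -normrN; exact: ler_norm]. Qed.

Lemma nle2 (a c : R) : -c <= a -> a <= c -> `|a| <= c.
Proof. by move=> h1 h2; rewrite ler_norml h1 h2. Qed.

Lemma max0_lip (x y : R) : `|Num.max x 0 - Num.max y 0| <= `|x - y|.
Proof.
have [h1 h2] := nge (x - y).
apply: nle2.
- by case: (lerP x 0) => hx; case: (lerP y 0) => hy; lra.
- by case: (lerP x 0) => hx; case: (lerP y 0) => hy; lra.
Qed.

Lemma max0_norm (x : R) : `|Num.max x 0| <= `|x|.
Proof. by have := max0_lip x 0; rewrite (max_r (lexx 0)) !subr0. Qed.

Lemma sum_norm_le (I : finType) (f : I -> R) c :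
  (forall i, `|f i| <= c) -> `|\sum_i f i| <= #|I|%:R * c.
Proof.
move=> h; apply: le_trans (ler_norm_sum _ _ _) _.
apply: le_trans (_ : \sum_i c <= _); first by apply: ler_sum => i _.
by rewrite sumr_const mulr_natl.
Qed.

Definition lipI (f : R -> R) := exists K, 0 <= K /\ forall s t, 0 <= s <= 1 -> 0 <= t <= 1 ->
  `|f s - f t| <= K * `|s - t|.

Lemma lipI_ext g f : (forall s, f s = g s) -> lipI g -> lipI f.
Proof. by move=> e [K [K0 h]]; exists K; split => // s t hs ht; rewrite !e; apply: h. Qed.

Lemma lipI_const c : lipI (fun _ => c).
Proof. by exists 0; split => // s t _ _; rewrite subrr normr0 mul0r. Qed.

Lemma lipI_aff a b : lipI (fun s => a + s * b).
Proof.
exists `|b|; split => // s t _ _.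
have -> : a + s * b - (a + t * b) = b * (s - t) by ring.
by rewrite normrM.
Qed.

Lemma lipI_add f g : lipI f -> lipI g -> lipI (fun s => f s + g s).
Proof.
move=> [K [K0 h]] [L [L0 h']]; exists (K + L); split; first exact: addr_ge0.
move=> s t hs ht.
have -> : f s + g s - (f t + g t) = (f s - f t) + (g s - g t) by ring.
apply: le_trans (ler_normD _ _) _; rewrite mulrDl.
by apply: lerD; [apply: h | apply: h'].
Qed.

Lemma lipI_scale c f : lipI f -> lipI (fun s => c * f s).
Proof.
move=> [K [K0 h]]; exists (`|c| * K); split; first by rewrite mulr_ge0.
move=> s t hs ht; rewrite -mulrBr normrM -mulrA.
by apply: ler_wpM2l => //; apply: h.
Qed.

Lemma lipI_sum (I : Type) (r : seq I) (P : pred I) (F : I -> R -> R) :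
  (forall i, lipI (F i)) -> lipI (fun s => \sum_(i <- r | P i) F i s).
Proof.
move=> h; elim: r => [|i r IH].
  by apply: (lipI_ext (g := fun _ => 0)) => [s|]; [rewrite big_nil | apply: lipI_const].
case: (boolP (P i)) => Pi.
  apply: (lipI_ext (g := fun s => F i s + \sum_(j <- r | P j) F j s)) => [s|].
    by rewrite big_cons Pi.
  by apply: lipI_add.
by apply: (lipI_ext (g := fun s => \sum_(j <- r | P j) F j s)) => [s|//]; rewrite big_cons (negbTE Pi).
Qed.

Lemma lipI_rsq a b c : lipI (fun s => (Num.max (a + s * b) 0 - c) ^+ 2).
Proof.
exists ((`|b| * (2 * (`|a| + `|b| + `|c|)))); split.
  by rewrite mulr_ge0 // mulr_ge0 // !addr_ge0.
move=> s t /andP [s0 s1] /andP [t0 t1].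
set p := Num.max (a + s * b) 0 - c; set q := Num.max (a + t * b) 0 - c.
have -> : p ^+ 2 - q ^+ 2 = (p - q) * (p + q) by ring.
rewrite normrM.
have hpq : `|p - q| <= `|b| * `|s - t|.
  have -> : p - q = Num.max (a + s * b) 0 - Num.max (a + t * b) 0 by rewrite /p /q; ring.
  apply: le_trans (max0_lip _ _) _.
  have -> : a + s * b - (a + t * b) = b * (s - t) by ring.
  by rewrite normrM.
have bnd : forall u, 0 <= u <= 1 -> `|Num.max (a + u * b) 0 - c| <= `|a| + `|b| + `|c|.
  move=> u /andP [u0 u1].
  apply: le_trans (ler_normB _ _) _; apply: lerD => //.
  apply: le_trans (max0_norm _) _; apply: le_trans (ler_normD _ _) _.
  apply: lerD => //; rewrite normrM -[X in _ <= X]mul1r; apply: ler_wpM2r => //.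
  by rewrite ger0_norm.
have hpq2 : `|p + q| <= 2 * (`|a| + `|b| + `|c|).
  apply: le_trans (ler_normD _ _) _; rewrite mulr2n mulrDl mul1r.
  by apply: lerD; apply: bnd; apply/andP.
have -> : `|b| * (2 * (`|a| + `|b| + `|c|)) * `|s - t| = (`|b| * `|s - t|) * (2 * (`|a| + `|b| + `|c|)) by ring.
by apply: ler_pM.
Qed.
Lemma sum_norm_le' n (f : 'I_n -> R) c :
  (forall i, `|f i| <= c) -> `|\sum_(i < n) f i| <= n%:R * c.
Proof. by move=> h; have := @sum_norm_le _ f c h; rewrite card_ord. Qed.

Lemma sq_bound (a c : R) : a ^+ 2 <= c -> `|a| <= 1 + c.
Proof.
move=> h; have e : `|a| ^+ 2 = a ^+ 2 := real_normK (num_real a).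
have := normr_ge0 a; have := sqr_ge0 (`|a| - 1); nra.
Qed.

Lemma abs_le_sqrt (a b : R) : a ^+ 2 <= b -> `|a| <= Num.sqrt b.
Proof.
move=> h; have b0 : 0 <= b := le_trans (sqr_ge0 a) h.
by rewrite -sqrtr_sqr ler_sqrt.
Qed.

Lemma entry_diff (x u1 u2 C : R) :
  `|Num.max u1 0 - x| <= C -> `|Num.max u2 0 - x| <= C ->
  `|(Num.max u1 0 - x) ^+ 2 - (Num.max u2 0 - x) ^+ 2| <= `|u1 - u2| * (2 * C).
Proof.
move=> h1 h2.
have -> : (Num.max u1 0 - x) ^+ 2 - (Num.max u2 0 - x) ^+ 2 =
  (Num.max u1 0 - Num.max u2 0) * ((Num.max u1 0 - x) + (Num.max u2 0 - x)) by ring.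
rewrite normrM; apply: ler_pM => //; first exact: max0_lip.
apply: le_trans (ler_normD _ _) _; rewrite mulr2n mulrDl mul1r; exact: lerD.
Qed.

Lemma u_diff n (w1 w2 v1 v2 : 'I_n -> R) (c1 c2 CW CV D : R) :
  (forall k, `|w1 k - w2 k| <= D) -> (forall k, `|v1 k - v2 k| <= D) ->
  (forall k, `|v1 k| <= CV) -> (forall k, `|w2 k| <= CW) -> `|c1 - c2| <= D ->
  `|(\sum_(k < n) w1 k * v1 k + c1) - (\sum_(k < n) w2 k * v2 k + c2)|
     <= n%:R * ((CV + CW) * D) + D.
Proof.
move=> hw hv hv1 hw2 hc.
have -> : (\sum_(k < n) w1 k * v1 k + c1) - (\sum_(k < n) w2 k * v2 k + c2)
  = \sum_(k < n) (w1 k * v1 k - w2 k * v2 k) + (c1 - c2) by rewrite sumrB; ring.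
apply: le_trans (ler_normD _ _) _; apply: lerD => //.
apply: sum_norm_le' => k.
have -> : w1 k * v1 k - w2 k * v2 k = (w1 k - w2 k) * v1 k + w2 k * (v1 k - v2 k) by ring.
apply: le_trans (ler_normD _ _) _; rewrite !normrM mulrDl.
apply: lerD; first by rewrite mulrC; apply: ler_pM.
by apply: ler_pM.
Qed.

End Aux.
Arguments lipI_ext {R} g f.
Arguments lipI {R} f.
Arguments nle {R a c}. Arguments nle2 {R a c}. Arguments nge {R}. Arguments max0_lip {R}. Arguments max0_norm {R}.
Arguments lipI_rsq {R}. Arguments sum_norm_le {R I} f c. Arguments lipI_const {R} c. Arguments lipI_aff {R} a b.
Arguments sum_norm_le' {R n} f c.
Arguments sq_bound {R a c}. Arguments abs_le_sqrt {R a b}. Arguments entry_diff {R x u1 u2 C}.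

Set Implicit Arguments.

Section Main.
Variables (R : realType) (N0 N1 N : nat) (X : 'M[R]_(N0, N)) (lam1 lam2 beta : R).

Implicit Types z : param R N0 N1 N.

Definition rr (z : param R N0 N1 N) (k : 'I_N1) (n : 'I_N) : R :=
  relu (pW z *m col n X + pb1 z) k 0.
Definition zs (z : param R N0 N1 N) (s : R) : param R N0 N1 N :=
  Param (pW z) (pb1 z) (pb2 z) (\matrix_(k, n) (pV z k n + s * (rr z k n - pV z k n))).
Definition Sv (z : param R N0 N1 N) : R := \sum_(n < N) \sum_(k < N1) (pV z k n - rr z k n).

Lemma max0_ge0 (x : R) : 0 <= Num.max x 0.
Proof. by case: (lerP x 0) => h; lra. Qed.

Lemma eqle (a b : R) : a = b -> a <= b.
Proof. by move=> ->. Qed.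

Lemma le_dsum (I J : finType) (f : I -> J -> R) i j :
  (forall i j, 0 <= f i j) -> f i j <= \sum_i \sum_j f i j.
Proof.
move=> h; rewrite (bigD1 i) //= (bigD1 j) //= -addrA lerDl.
by rewrite addr_ge0 // sumr_ge0 // => i' _; rewrite sumr_ge0.
Qed.

Lemma sumsq (I J : finType) (f : I -> J -> R) :
  (forall i j, 0 <= f i j) -> \sum_i \sum_j f i j ^+ 2 <= (\sum_i \sum_j f i j) ^+ 2.
Proof.
move=> h; set S := \sum_i \sum_j f i j.
apply: le_trans (_ : \sum_i \sum_j f i j * S <= _).
  apply: ler_sum => i _; apply: ler_sum => j _.
  by rewrite expr2; apply: ler_wpM2l => //; apply: le_dsum.
by rewrite expr2 mulr_suml; apply: eqle; apply: eq_bigr => i _; rewrite mulr_suml.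
Qed.

Lemma frob2_ge0 m n (A : 'M[R]_(m, n)) : 0 <= frob2 A.
Proof. by rewrite /frob2 sumr_ge0 // => i _; rewrite sumr_ge0 // => j _; rewrite sqr_ge0. Qed.

Lemma frob2_0 m n : frob2 (0 : 'M[R]_(m, n)) = 0.
Proof. by rewrite /frob2 big1 // => i _; rewrite big1 // => j _; rewrite mxE expr0n. Qed.

Lemma o1o2 z : Omega1 X z -> Omega2 X z.
Proof.
move=> h n k; have := congr1 (fun M : 'cV[R]_N1 => M k 0) (h n); rewrite mxE /= => <-; exact: lexx.
Qed.

Lemma Pfun_S z : Pfun X beta z = beta * Sv z.
Proof. by rewrite /Pfun /Sv; congr (_ * _); apply: eq_bigr => n _; apply: eq_bigr => k _; rewrite /rr !mxE. Qed.

Lemma Sv_ge0 z : Omega2 X z -> 0 <= Sv z.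
Proof. by move=> h; rewrite sumr_ge0 // => n _; rewrite sumr_ge0 // => k _; rewrite subr_ge0; apply: h. Qed.

Lemma Sv0 z : Omega2 X z -> Sv z = 0 -> Omega1 X z.
Proof.
move=> h e n.
have hn : forall n k, 0 <= pV z k n - rr z k n by move=> n' k; rewrite subr_ge0; apply: h.
have h1 : \sum_(k < N1) (pV z k n - rr z k n) = 0 :=
  psumr_eq0P (fun n' _ => sumr_ge0 _ (fun k _ => hn n' k)) e isT.
have h2 := psumr_eq0P (fun k _ => hn n k) h1.
have h3 : forall k, pV z k n - rr z k n = 0 := fun k => h2 k isT.
apply/matrixP => k j; rewrite (ord1 j) mxE; apply/eqP; rewrite -subr_eq0; apply/eqP.
by have := h3 k; rewrite /rr mxE.
Qed.

Lemma o1_S z : Omega1 X z -> Sv z = 0.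
Proof.
move=> h; rewrite /Sv big1 // => n _; rewrite big1 // => k _.
have := congr1 (fun M : 'cV[R]_N1 => M k 0) (h n); rewrite mxE /= /rr => ->; exact: subrr.
Qed.

Lemma zs_o2 z s : Omega2 X z -> 0 <= s <= 1 -> Omega2 X (zs z s).
Proof.
move=> h /andP [s0 s1] n k; rewrite [X in _ <= X]mxE.
have hk : rr z k n <= pV z k n := h n k.
have hh : 0 <= (1 - s) * (pV z k n - rr z k n) by rewrite mulr_ge0 // subr_ge0.
change (rr z k n <= pV z k n + s * (rr z k n - pV z k n)).
have -> : pV z k n + s * (rr z k n - pV z k n) = rr z k n + (1 - s) * (pV z k n - rr z k n) by ring.
by rewrite lerDl.
Qed.

Lemma zs1_o1 z : Omega1 X (zs z 1).
Proof. by move=> n; apply/matrixP => k j; rewrite (ord1 j) [LHS]mxE [LHS]mxE /rr mul1r addrC subrK. Qed.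

Lemma zs0 z : zs z 0 = z.
Proof.
case: z => W b1 b2 V; rewrite /zs /=; congr Param.
by apply/matrixP => i j; rewrite mxE mul0r addr0.
Qed.

Lemma P_zs z s : Pfun X beta (zs z s) = (1 - s) * (beta * Sv z).
Proof.
rewrite Pfun_S mulrCA; congr (_ * _); rewrite /Sv mulr_sumr; apply: eq_bigr => n _.
rewrite mulr_sumr; apply: eq_bigr => k _; rewrite mxE /rr /=; ring.
Qed.

Lemma pdist_zs z s : Omega2 X z -> 0 <= s <= 1 -> pdist z (zs z s) <= s * Sv z.
Proof.
move=> h /andP [s0 s1]; rewrite /pdist /= !subrr !frob2_0 !add0r.
have hS : 0 <= s * Sv z by rewrite mulr_ge0 // Sv_ge0.
rewrite -(ger0_norm hS) -sqrtr_sqr ler_sqrt ?sqr_ge0 //.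
have e : forall k n, (pV z - \matrix_(k, n) (pV z k n + s * (rr z k n - pV z k n))) k n
   = s * (pV z k n - rr z k n) by move=> k n; rewrite !mxE; ring.
rewrite /frob2; under eq_bigr => k _ do under eq_bigr => n _ do rewrite e.
apply: le_trans (@sumsq _ _ (fun (k : 'I_N1) (n : 'I_N) => s * (pV z k n - rr z k n)) _) _.
  by move=> k n; rewrite mulr_ge0 // subr_ge0; apply: h.
rewrite exchange_big /= /Sv mulr_sumr; apply: eqle; congr (_ ^+ 2).
by apply: eq_bigr => n _; rewrite mulr_sumr.
Qed.


Lemma lipI_O z : lipI (fun s => Ofun X lam1 lam2 beta (zs z s)).
Proof.
rewrite /Ofun; apply: lipI_add; first apply: lipI_add.
- rewrite /Ffun; apply: lipI_scale; apply: lipI_sum => n; rewrite /frob2.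
  apply: lipI_sum => i; apply: lipI_sum => j.
  apply: (lipI_ext (fun s => (Num.max ((\sum_k pW z k i * pV z k n + pb2 z i j)
     + s * (\sum_k pW z k i * (rr z k n - pV z k n))) 0 - X i n) ^+ 2)); last exact: lipI_rsq.
  move=> s; rewrite !mxE; under eq_bigr => k _ do rewrite !mxE.
  congr ((Num.max _ 0 - _) ^+ 2).
  rewrite mulr_sumr -addrA [pb2 z i j + _]addrC addrA -big_split /=; congr (_ + _).
  by apply: eq_bigr => k _; ring.
- rewrite /Rfun; apply: lipI_add.
  + apply: lipI_scale; apply: lipI_sum => n; apply: lipI_sum => k.
    apply: (lipI_ext (fun s => pV z k n + s * (rr z k n - pV z k n))); last exact: lipI_aff.
    by move=> s; rewrite mxE.
  + by apply: (lipI_ext (fun _ => lam2 * frob2 (pW z))) => //; exact: lipI_const.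
- apply: (lipI_ext (fun s => beta * Sv z + s * (- (beta * Sv z)))); last exact: lipI_aff.
  by move=> s; rewrite P_zs; ring.
Qed.

Lemma chain t0 LF LR (z : param R N0 N1 N) :
  lipconst (Ffun (N1 := N1) X) (OmegaLvl X lam1 lam2 beta t0) LF ->
  lipconst (Rfun (N0 := N0) (N1 := N1) (N := N) lam1 lam2) (OmegaLvl X lam1 lam2 beta t0) LR ->
  LF + LR <= beta -> Omega2 X z -> Ofun X lam1 lam2 beta z < t0 ->
  Ffun X (zs z 1) + Rfun lam1 lam2 (zs z 1) + (beta - (LF + LR)) * Sv z
    <= Ofun X lam1 lam2 beta z.
Proof.
move=> [LF0 hF] [LR0 hR] hb h2 hO.
have S0 := Sv_ge0 h2.
have Oz : OmegaLvl X lam1 lam2 beta t0 z by split => //; exact: ltW.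
have step : forall s, 0 <= s <= 1 -> OmegaLvl X lam1 lam2 beta t0 (zs z s) ->
   Ffun X (zs z s) + Rfun lam1 lam2 (zs z s) <=
   Ffun X z + Rfun lam1 lam2 z + (LF * (s * Sv z) + LR * (s * Sv z)).
  move=> s hs hz.
  have pd := @pdist_zs z s h2 hs.
  have [a1 _] := nle (hF _ _ Oz hz).
  have [a2 _] := nle (hR _ _ Oz hz).
  have b1 : LF * pdist z (zs z s) <= LF * (s * Sv z) := ler_wpM2l LF0 pd.
  have b2 : LR * pdist z (zs z s) <= LR * (s * Sv z) := ler_wpM2l LR0 pd.
  lra.
have stepO : forall s, 0 <= s <= 1 -> OmegaLvl X lam1 lam2 beta t0 (zs z s) ->
    Ofun X lam1 lam2 beta (zs z s) <= Ofun X lam1 lam2 beta z.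
  move=> s hs hz; have := step s hs hz.
  rewrite /Ofun P_zs Pfun_S.
  have : LF * (s * Sv z) + LR * (s * Sv z) <= beta * (s * Sv z).
    rewrite -mulrDl; apply: ler_wpM2r => //; rewrite mulr_ge0 //; by case/andP: hs.
  have -> : (1 - s) * (beta * Sv z) = beta * Sv z - beta * (s * Sv z) by ring.
  lra.
have [K [K0 hK]] := lipI_O z.
pose eps := t0 - Ofun X lam1 lam2 beta z.
have eps0 : 0 < eps by rewrite subr_gt0.
pose m := Num.bound ((K + 1) / eps).
have e1 : 0 <= (K + 1) / eps by apply: divr_ge0; lra.
have hm : (K + 1) / eps < m%:R by apply: archi_boundP.
have m0 : 0 < m%:R :> R by apply: le_lt_trans hm.
have Km : K * m%:R^-1 <= eps.
  have h1 : K + 1 < m%:R * eps by rewrite -ltr_pdivrMr.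
  rewrite ler_pdivrMr // mulrC; lra.
have hs : forall j, (j <= m)%N -> 0 <= (j%:R / m%:R : R) <= 1.
  move=> j hj; apply/andP; split; first by apply: divr_ge0 => //; apply: ltW.
  by rewrite ler_pdivrMr // mul1r ler_nat.
have ind : forall k, (k <= m)%N -> OmegaLvl X lam1 lam2 beta t0 (zs z (k%:R / m%:R)).
  elim=> [|k IH] hk; first by rewrite mul0r zs0.
  have hk' : (k <= m)%N by apply: ltnW.
  have hz := IH hk'.
  split; first by apply: zs_o2 => //; apply: hs.
  have := hK _ _ (hs _ hk) (hs _ hk').
  have -> : k.+1%:R / m%:R - k%:R / m%:R = (m%:R^-1 : R) by rewrite -natr1; ring.
  rewrite (gtr0_norm (_ : 0 < (m%:R^-1 : R))); last by rewrite invr_gt0.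
  move=> hh; have [_ u] := nle hh.
  have := stepO _ (hs _ hk') hz.
  rewrite /eps in Km; lra.
have h1 := ind m (leqnn m).
rewrite divff ?gt_eqF // in h1.
have := step 1 (ltac:(by rewrite ler01 lexx)) h1.
rewrite !mul1r /Ofun Pfun_S.
have -> : (beta - (LF + LR)) * Sv z = beta * Sv z - LF * Sv z - LR * Sv z by ring.
lra.
Qed.

Lemma entry_sq_le m n (A : 'M[R]_(m, n)) i j : A i j ^+ 2 <= frob2 A.
Proof. by rewrite /frob2; apply: (@le_dsum _ _ (fun i j => A i j ^+ 2)) => i' j'; exact: sqr_ge0. Qed.

Lemma pdist_parts z1 z2 :
  [/\ frob2 (pW z1 - pW z2) <= pdist z1 z2 ^+ 2, frob2 (pb2 z1 - pb2 z2) <= pdist z1 z2 ^+ 2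
    & frob2 (pV z1 - pV z2) <= pdist z1 z2 ^+ 2].
Proof.
have h1 := frob2_ge0 (pW z1 - pW z2); have h2 := frob2_ge0 (pb1 z1 - pb1 z2).
have h3 := frob2_ge0 (pb2 z1 - pb2 z2); have h4 := frob2_ge0 (pV z1 - pV z2).
rewrite /pdist sqr_sqrtr; last by rewrite !addr_ge0.
by split; lra.
Qed.

Lemma pdist_ge0 z1 z2 : 0 <= pdist z1 z2.
Proof. exact: sqrtr_ge0. Qed.

Lemma entry_le_pdist m n (A : 'M[R]_(m, n)) d i j : frob2 A <= d ^+ 2 -> 0 <= d -> `|A i j| <= d.
Proof.
move=> h d0; have := le_trans (entry_sq_le A i j) h.
have e : `|A i j| ^+ 2 = A i j ^+ 2 := real_normK (num_real _).
have := normr_ge0 (A i j); rewrite -e; nra.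
Qed.

Lemma pdW z1 z2 i j : `|pW z1 i j - pW z2 i j| <= pdist z1 z2.
Proof. have [h _ _] := pdist_parts z1 z2; have := @entry_le_pdist _ _ _ _ i j h (pdist_ge0 _ _); by rewrite !mxE. Qed.
Lemma pdb2 z1 z2 i j : `|pb2 z1 i j - pb2 z2 i j| <= pdist z1 z2.
Proof. have [_ h _] := pdist_parts z1 z2; have := @entry_le_pdist _ _ _ _ i j h (pdist_ge0 _ _); by rewrite !mxE. Qed.
Lemma pdV z1 z2 i j : `|pV z1 i j - pV z2 i j| <= pdist z1 z2.
Proof. have [_ _ h] := pdist_parts z1 z2; have := @entry_le_pdist _ _ _ _ i j h (pdist_ge0 _ _); by rewrite !mxE. Qed.

Definition ent z n i j := (relu ((pW z)^T *m col n (pV z) + pb2 z) - col n X) i j.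

Lemma le_sum1 (I : finType) (f : I -> R) i : (forall i, 0 <= f i) -> f i <= \sum_i f i.
Proof.
move=> h; rewrite (bigD1 i) //= lerDl; by rewrite sumr_ge0.
Qed.

Lemma lvl_bounds t z : (0 < N)%N -> 0 < lam1 -> 0 < lam2 -> 0 < beta ->
  OmegaLvl X lam1 lam2 beta t z ->
  [/\ forall k n, `|pV z k n| <= t / lam1,
      forall i j, `|pW z i j| <= 1 + t / lam2
    & forall n i j, `|ent z n i j| <= 1 + N%:R * t].
Proof.
move=> hN hl1 hl2 hb [h2 hO].
have F0 : 0 <= Ffun X z.
  by rewrite /Ffun mulr_ge0 // ?invr_ge0 ?ler0n // sumr_ge0 // => n _; apply: frob2_ge0.
have rr0 : forall k n, 0 <= rr z k n by move=> k n; rewrite /rr mxE; apply: max0_ge0.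
have V0 : forall k n, 0 <= pV z k n by move=> k n; apply: le_trans (rr0 k n) (h2 n k).
have SV0 : 0 <= \sum_(n < N) \sum_(k < N1) pV z k n.
  by rewrite sumr_ge0 // => n _; rewrite sumr_ge0.
have fW0 := frob2_ge0 (pW z).
have P0 : 0 <= Pfun X beta z by rewrite Pfun_S; apply: mulr_ge0; [exact: ltW | exact: Sv_ge0].
move: hO; rewrite /Ofun /Rfun => hO.
have hSV : lam1 * (\sum_(n < N) \sum_(k < N1) pV z k n) <= t.
  have := mulr_ge0 (ltW hl2) fW0; lra.
have hfW : lam2 * frob2 (pW z) <= t.
  have := mulr_ge0 (ltW hl1) SV0; lra.
have hF : Ffun X z <= t.
  have := mulr_ge0 (ltW hl1) SV0; have := mulr_ge0 (ltW hl2) fW0; lra.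
split.
- move=> k n; rewrite ger0_norm // ler_pdivlMr // mulrC.
  apply: le_trans hSV; apply: ler_wpM2l; first exact: ltW.
  exact: (@le_dsum _ _ (fun n k => pV z k n) n k (fun n k => V0 k n)).
- move=> i j; apply: sq_bound; rewrite ler_pdivlMr // mulrC.
  by apply: le_trans hfW; apply: ler_wpM2l; [exact: ltW | exact: entry_sq_le].
- move=> n i j; apply: sq_bound.
  have hN0 : (N%:R : R) != 0 by rewrite pnatr_eq0 -lt0n.
  have e : \sum_(n < N) frob2 (relu ((pW z)^T *m col n (pV z) + pb2 z) - col n X) = N%:R * Ffun X z.
    by rewrite /Ffun mulrA divff // mul1r.
  apply: le_trans (entry_sq_le _ i j) _.
  apply: le_trans (@le_sum1 _ (fun n => frob2 (relu ((pW z)^T *m col n (pV z) + pb2 z) - col n X)) n _) _.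
    by move=> n'; apply: frob2_ge0.
  by rewrite e; apply: ler_wpM2l => //; rewrite ler0n.
Qed.

Lemma Fdiff z1 z2 CW CV C D : 0 <= C -> 0 <= D ->
  (forall i j, `|pW z2 i j| <= CW) -> (forall k n, `|pV z1 k n| <= CV) ->
  (forall n i j, `|ent z1 n i j| <= C) -> (forall n i j, `|ent z2 n i j| <= C) ->
  (forall i j, `|pW z1 i j - pW z2 i j| <= D) -> (forall i j, `|pb2 z1 i j - pb2 z2 i j| <= D) ->
  (forall k n, `|pV z1 k n - pV z2 k n| <= D) ->
  `|Ffun X z1 - Ffun X z2| <=
    N%:R^-1 * (N%:R * (N0%:R * (1%:R * (((N1%:R * ((CV + CW) * D) + D) * (2 * C)))))).
Proof.
move=> C0 D0 hW2 hV1 he1 he2 dW db dV.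
have key : forall n i j, `|ent z1 n i j ^+ 2 - ent z2 n i j ^+ 2| <=
    (N1%:R * ((CV + CW) * D) + D) * (2 * C).
  move=> n i j.
  have h1 := he1 n i j; have h2 := he2 n i j.
  move: h1 h2; rewrite /ent !mxE => h1 h2.
  apply: le_trans (entry_diff h1 h2) _; apply: ler_wpM2r; first by rewrite mulr_ge0.
  under eq_bigr => k _ do rewrite !mxE.
  under [X in _ - (X + _)]eq_bigr => k _ do rewrite !mxE.
  exact: u_diff.
rewrite /Ffun -mulrBr normrM ger0_norm ?invr_ge0 ?ler0n //.
apply: ler_wpM2l; first by rewrite invr_ge0 ler0n.
rewrite -sumrB; apply: sum_norm_le' => n.
rewrite /frob2 -sumrB; apply: sum_norm_le' => i.
rewrite -sumrB; apply: sum_norm_le' => j.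
exact: key.
Qed.

Lemma Rdiff z1 z2 CW D : 0 <= lam1 -> 0 <= lam2 ->
  (forall i j, `|pW z1 i j| <= CW) -> (forall i j, `|pW z2 i j| <= CW) ->
  (forall i j, `|pW z1 i j - pW z2 i j| <= D) -> (forall k n, `|pV z1 k n - pV z2 k n| <= D) ->
  `|Rfun lam1 lam2 z1 - Rfun lam1 lam2 z2| <=
    lam1 * (N%:R * (N1%:R * D)) + lam2 * (N1%:R * (N0%:R * (D * (2 * CW)))).
Proof.
move=> l1 l2 hW1 hW2 dW dV.
rewrite /Rfun.
have -> : lam1 * (\sum_(n < N) \sum_(k < N1) pV z1 k n) + lam2 * frob2 (pW z1) -
    (lam1 * (\sum_(n < N) \sum_(k < N1) pV z2 k n) + lam2 * frob2 (pW z2)) =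
    lam1 * (\sum_(n < N) \sum_(k < N1) pV z1 k n - \sum_(n < N) \sum_(k < N1) pV z2 k n)
    + lam2 * (frob2 (pW z1) - frob2 (pW z2)) by ring.
apply: le_trans (ler_normD _ _) _; rewrite !normrM (ger0_norm l1) (ger0_norm l2).
apply: lerD; apply: ler_wpM2l => //.
  rewrite -sumrB; apply: sum_norm_le' => n; rewrite -sumrB; apply: sum_norm_le' => k; exact: dV.
rewrite /frob2 -sumrB; apply: sum_norm_le' => i; rewrite -sumrB; apply: sum_norm_le' => j.
have -> : pW z1 i j ^+ 2 - pW z2 i j ^+ 2 = (pW z1 i j - pW z2 i j) * (pW z1 i j + pW z2 i j) by ring.
rewrite normrM; apply: ler_pM => //.
apply: le_trans (ler_normD _ _) _; rewrite mulr2n mulrDl mul1r; exact: lerD.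
Qed.

End Main.

Unset Implicit Arguments.

Theorem theorem2p2 (R : realType) (N0 N1 N : nat) (X : 'M[R]_(N0, N))
    (lam1 lam2 beta theta : R) :
  (0 < N)%N -> (0 < N0)%N -> (0 < N1)%N ->
  0 < lam1 -> 0 < lam2 -> 0 < beta ->
  N%:R^-1 * frob2 X < theta ->
  let F := Ffun (N1 := N1) X in
  let Rg := Rfun (N0 := N0) (N := N) lam1 lam2 in
  let Om_theta := OmegaLvl X lam1 lam2 beta theta in
  let delta := 3 * theta + (2 * N%:R * theta ^+ 3) / (lam1 ^+ 2 * lam2) in
  let Om_delta := OmegaLvl X lam1 lam2 beta delta in
  (* (a) *)
  (lipschitz_on F Om_theta /\ lipschitz_on Rg Om_theta) /\
  (* (b) *)
  (forall (LF LR : R) (zb : param R N0 N1 N),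
     lipconst F Om_theta LF -> lipconst Rg Om_theta LR -> LF + LR < beta ->
     Om_theta zb -> globmin_R X lam1 lam2 zb ->
     globmin_RP X lam1 lam2 beta zb) /\
  (* (c) *)
  (forall (LF LR : R) (zb : param R N0 N1 N),
     lipconst F Om_delta LF -> lipconst Rg Om_delta LR -> LF + LR < beta ->
     Om_theta zb -> globmin_RP X lam1 lam2 beta zb ->
     globmin_R X lam1 lam2 zb).
Proof.
move=> hN hN0 hN1 hl1 hl2 hb hth F Rg Omt delta Omd.
have th0 : 0 < theta.
  apply: le_lt_trans hth; apply: mulr_ge0; [by rewrite invr_ge0 ler0n | exact: frob2_ge0].
have dth : theta < delta.
  rewrite /delta.
  have : 0 < (2 * N%:R * theta ^+ 3) / (lam1 ^+ 2 * lam2).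
    apply: divr_gt0; first by rewrite !mulr_gt0 ?exprn_gt0 // ltr0n.
    by rewrite mulr_gt0 ?exprn_gt0.
  lra.
have cv0 : 0 <= theta / lam1 by apply: divr_ge0; apply: ltW.
have cw0 : 0 <= 1 + theta / lam2 by apply: addr_ge0 => //; apply: divr_ge0; apply: ltW.
have c0 : 0 <= 1 + N%:R * theta by apply: addr_ge0 => //; apply: mulr_ge0; [exact: ler0n | exact: ltW].
split; [split|split].
- exists (N%:R^-1 * (N%:R * (N0%:R * (1%:R * ((N1%:R * (theta / lam1 + (1 + theta / lam2)) + 1)
     * (2 * (1 + N%:R * theta))))))).
  split.
    by repeat first [done | (rewrite invr_ge0 ler0n) | exact: ler0n | apply: mulr_ge0 | apply: addr_ge0].
  move=> z1 z2 h1 h2.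
  have [bV1 bW1 be1] := lvl_bounds hN hl1 hl2 hb h1.
  have [bV2 bW2 be2] := lvl_bounds hN hl1 hl2 hb h2.
  have HH := (Fdiff X z1 z2 _ _ _ _ c0 (pdist_ge0 z1 z2) bW2 bV1 be1 be2 (pdW z1 z2) (pdb2 z1 z2) (pdV z1 z2)).
  apply: le_trans HH _.
  apply: eqle; ring.
- exists (lam1 * (N%:R * N1%:R) + lam2 * (N1%:R * (N0%:R * (2 * (1 + theta / lam2))))).
  split.
    by repeat first [done | exact: ler0n | exact: ltW | apply: mulr_ge0 | apply: addr_ge0].
  move=> z1 z2 h1 h2.
  have [bV1 bW1 be1] := lvl_bounds hN hl1 hl2 hb h1.
  have [bV2 bW2 be2] := lvl_bounds hN hl1 hl2 hb h2.
  apply: le_trans (Rdiff lam1 lam2 z1 z2 _ _ (ltW hl1) (ltW hl2) bW1 bW2 (pdW z1 z2) (pdV z1 z2)) _.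
  apply: eqle; ring.
- move=> LF LR zb hLF hLR hLb hzb [o1 hmin].
  split; first exact: o1o2.
  move=> z h2z.
  have Ezb : Ofun X lam1 lam2 beta zb = Ffun X zb + Rfun lam1 lam2 zb.
    by rewrite /Ofun Pfun_S (o1_S o1) mulr0 addr0.
  case: (lerP theta (Ofun X lam1 lam2 beta z)) => hz.
    by apply: le_trans hz; case: hzb.
  have := chain hLF hLR (ltW hLb) h2z hz.
  have := hmin _ (zs1_o1 X z).
  have := Sv_ge0 h2z => S0.
  have : 0 <= (beta - (LF + LR)) * Sv X z by apply: mulr_ge0 => //; lra.
  rewrite Ezb; lra.
- move=> LF LR zb hLF hLR hLb hzb [h2 hmin].
  have O1 : Omega1 X zb.
    have S0 := Sv_ge0 h2.
    case: (eqVneq (Sv X zb) 0) => hS; first exact: Sv0.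
    have Sp : 0 < Sv X zb by rewrite lt_def hS.
    have hzd : Ofun X lam1 lam2 beta zb < delta by case: hzb => _ hh; lra.
    have := chain hLF hLR (ltW hLb) h2 hzd.
    have := hmin _ (o1o2 (zs1_o1 X zb)).
    have Ez : Ofun X lam1 lam2 beta (zs X zb 1) = Ffun X (zs X zb 1) + Rfun lam1 lam2 (zs X zb 1).
      by rewrite /Ofun Pfun_S (o1_S (zs1_o1 X zb)) mulr0 addr0.
    rewrite Ez.
    have : 0 < (beta - (LF + LR)) * Sv X zb by apply: mulr_gt0 => //; lra.
    lra.
  split => // z o1z.
  have := hmin z (o1o2 o1z).
  rewrite /Ofun !Pfun_S (o1_S o1z) (o1_S O1) !mulr0 !addr0 //.
Qed.
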